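(* Let $s,t\geq 0$ and let $\{\varphi_n\}_{n\in\mathbb{N}}$ be a sequence of elements of $\mathcal{S}^{s}_{t}(\mathbb{R}^d)$. Then $\{\varphi_n\}$ converges in $\mathcal{S}^{s}_{t}(\mathbb{R}^d)$ if and only if $\{\varphi_n\}$ is bounded in $\mathcal{S}^{s}_{t}(\mathbb{R}^d)$ and it converges pointwise on $\mathbb{R}^d$.
   Context: For $s,t\geq 0$, the Gelfand-Shilov space $\mathcal{S}^{s}_{t}(\mathbb{R}^d)$ is the set of $\varphi\in\mathcal{S}(\mathbb{R}^d)$ for which there is $h>0$ with $p_h^{s,t}(\varphi)=\sup_{x\in\mathbb{R}^d,\alpha,\beta\in\mathbb{N}^d}\frac{h^{|\alpha+\beta|}}{\alpha!^{t}\beta!^{s}}|x^\alpha\partial^\beta\varphi(x)|<\infty$; it carries the inductive limit topology defined by these norms (as $h\to 0^+$). *)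

(* Defs.v *)
From HB Require Import structures.
From mathcomp Require Import all_boot all_order all_algebra.
From mathcomp Require Import all_classical all_reals.
From mathcomp Require Import exp.
From mathcomp Require Import complex.

Set Implicit Arguments.
Unset Strict Implicit.
Unset Printing Implicit Defensive.
Import Order.TTheory GRing.Theory Num.Theory.
Local Open Scope ring_scope.

Section GelfandShilov.
Variable R : realType.
Variable d : nat.

Local Notation C := (R[i]).
Local Notation pt := 'rV[R]_d.
Local Notation mindex := {ffun 'I_d -> nat}.

Definition cabs (z : C) : R := Normc.normc z.

Definition mzero : mindex := [ffun => 0%N].
Definition mincr (b : mindex) (j : 'I_d) : mindex := [ffun k => (b k + (k == j))%N].
Definition mlen (a : mindex) : nat := (\sum_k a k)%N.
Definition mfact (a : mindex) : R := (\prod_k (a k)`!)%:R.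
Definition xpow (x : pt) (a : mindex) : R := \prod_k (x 0 k) ^+ a k.

Definition unitv (j : 'I_d) : pt := delta_mx 0 j.

Definition is_partial (j : 'I_d) (f g : pt -> C) : Prop :=
  forall x : pt, forall e : R, 0 < e -> exists del : R, 0 < del /\
    forall h : R, h != 0 -> `|h| < del ->
      cabs ((f (x + h *: unitv j) - f x) * ((h^-1)%:C)%C - g x) < e.

Definition is_derivs (f : pt -> C) (D : mindex -> pt -> C) : Prop :=
  D mzero = f /\ forall (b : mindex) (j : 'I_d), is_partial j (D b) (D (mincr b j)).

Definition ptnorm (x : pt) : R := \big[Num.max/0]_k `|x 0 k|.

Definition ccontinuous (f : pt -> C) : Prop :=
  forall x : pt, forall e : R, 0 < e -> exists del : R, 0 < del /\
    forall y : pt, ptnorm (y - x) < del -> cabs (f y - f x) < e.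

Definition schwartz (f : pt -> C) : Prop :=
  exists D, is_derivs f D /\ (forall b, ccontinuous (D b)) /\
    forall a b : mindex, exists M : R, forall x : pt, `|xpow x a| * cabs (D b x) <= M.

(* M is an upper bound for the quantities in p_h^{s,t}(f), i.e. p_h^{s,t}(f) <= M *)
Definition pbound (s t h : R) (f : pt -> C) (M : R) : Prop :=
  exists D, is_derivs f D /\
    forall (x : pt) (a b : mindex),
      h ^+ (mlen a + mlen b) / ((mfact a) `^ t * (mfact b) `^ s)
        * (`|xpow x a| * cabs (D b x)) <= M.

Definition GS (s t : R) (f : pt -> C) : Prop :=
  schwartz f /\ exists h M : R, 0 < h /\ pbound s t h f M.

Definition p_lt (s t h : R) (f : pt -> C) (e : R) : Prop :=
  exists M : R, M < e /\ pbound s t h f M.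

(* Zero-neighbourhood base of the (locally convex) inductive limit topology
   of the normed spaces (S^s_{t,h}, p_h), h -> 0+: absolutely convex subsets U
   of S^s_t whose trace on every step space contains a p_h-ball. *)
Definition GS_nbhd0 (s t : R) (U : (pt -> C) -> Prop) : Prop :=
  (forall f, U f -> GS s t f) /\
  (forall (f g : pt -> C) (a b : C), U f -> U g -> cabs a + cabs b <= 1 ->
     U (fun x => a * f x + b * g x)) /\
  (forall h : R, 0 < h -> exists e : R, 0 < e /\
     forall f, GS s t f -> p_lt s t h f e -> U f).

Definition GS_cvg_to (s t : R) (phi : nat -> pt -> C) (f : pt -> C) : Prop :=
  GS s t f /\ forall U, GS_nbhd0 s t U ->
    exists N : nat, forall n : nat, (N <= n)%N -> U (fun x => phi n x - f x).

Definition GS_converges (s t : R) (phi : nat -> pt -> C) : Prop :=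
  exists f, GS_cvg_to s t phi f.

Definition GS_bounded (s t : R) (phi : nat -> pt -> C) : Prop :=
  forall U, GS_nbhd0 s t U ->
    exists lam : R, 0 < lam /\ forall n : nat, U (fun x => ((lam^-1)%:C)%C * phi n x).

Definition pointwise_converges (phi : nat -> pt -> C) : Prop :=
  forall x : pt, exists L : C, forall e : R, 0 < e ->
    exists N : nat, forall n : nat, (N <= n)%N -> cabs (phi n x - L) < e.

End GelfandShilov.

(* Main.v *)
Require Import Defs.
From HB Require Import structures.
From mathcomp Require Import all_boot all_order all_algebra.
From mathcomp Require Import all_classical all_reals.
From mathcomp Require Import complex.
From mathcomp Require Import exp topology normedtype derive sequences.
From mathcomp Require Import ring lra.
Import Order.TTheory GRing.Theory Num.Theory.
Import numFieldNormedType.Exports.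
Local Open Scope ring_scope.
Set Implicit Arguments.
Unset Strict Implicit.
Unset Printing Implicit Defensive.
Section Basics.
Variable R : realType.
Variable d : nat.
Local Notation C := (R[i]).
Local Notation pt := 'rV[R]_d.
Local Notation mindex := {ffun 'I_d -> nat}.
Local Notation mz := (@mzero d).

Implicit Types (z w : C) (a b : mindex) (x : pt).

Lemma cabs_ge0 z : 0 <= cabs z.
Proof. by case: z => a b; rewrite /cabs /Normc.normc sqrtr_ge0. Qed.

Lemma cabsD z w : cabs (z + w) <= cabs z + cabs w.
Proof. exact: le_normcD. Qed.

Lemma cabsM z w : cabs (z * w) = cabs z * cabs w.
Proof. exact: Normc.normcM. Qed.

Lemma cabsN z : cabs (- z) = cabs z.
Proof. exact: normcN. Qed.

Lemma cabsB z w : cabs (z - w) = cabs (w - z).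
Proof. by rewrite -cabsN opprB. Qed.

Lemma cabs0 : cabs (0 : C) = 0.
Proof. exact: Normc.normc0. Qed.

Lemma cabs_eq0 z : cabs z = 0 -> z = 0.
Proof. exact: Normc.eq0_normc. Qed.

Lemma cabsR (k : R) : cabs (k%:C)%C = `|k|.
Proof. by rewrite /cabs /Normc.normc /= expr0n /= addr0 sqrtr_sqr. Qed.

Lemma cabsDB z w u : cabs (z - u) <= cabs (z - w) + cabs (w - u).
Proof. by rewrite (_ : z - u = (z - w) + (w - u)) ?cabsD // addrA subrK. Qed.

Lemma cabs_Re z : `|complex.Re z| <= cabs z.
Proof.
case: z => a b; rewrite /cabs /Normc.normc /= -sqrtr_sqr.
by apply: ler_wsqrtr; rewrite lerDl sqr_ge0.
Qed.

Lemma cabs_Im z : `|complex.Im z| <= cabs z.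
Proof.
case: z => a b; rewrite /cabs /Normc.normc /= -sqrtr_sqr.
by apply: ler_wsqrtr; rewrite lerDr sqr_ge0.
Qed.

Lemma cabs_ReIm z : cabs z <= `|complex.Re z| + `|complex.Im z|.
Proof.
case: z => a b.
have -> : (a +i* b)%C = ((a%:C)%C + (0 +i* b)%C) by apply/eqP; rewrite eq_complex /= addr0 add0r !eqxx.
apply: le_trans (cabsD _ _) _; rewrite cabsR /= addr0 add0r lerD2l.
by rewrite /cabs /Normc.normc /= expr0n /= add0r sqrtr_sqr.
Qed.

Lemma ReD z w : complex.Re (z + w) = complex.Re z + complex.Re w.
Proof. by case: z; case: w. Qed.
Lemma ImD z w : complex.Im (z + w) = complex.Im z + complex.Im w.
Proof. by case: z; case: w. Qed.
Lemma ReN z : complex.Re (- z) = - complex.Re z.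
Proof. by case: z. Qed.
Lemma ImN z : complex.Im (- z) = - complex.Im z.
Proof. by case: z. Qed.
Lemma ReMR z (k : R) : complex.Re (z * (k%:C)%C) = complex.Re z * k.
Proof. by case: z => a b /=; rewrite mulr0 subr0. Qed.
Lemma ImMR z (k : R) : complex.Im (z * (k%:C)%C) = complex.Im z * k.
Proof. by case: z => a b /=; rewrite mulr0 add0r. Qed.
Lemma ReR (k : R) : complex.Re ((k%:C)%C) = k. Proof. by []. Qed.
Lemma ImR (k : R) : complex.Im ((k%:C)%C) = 0. Proof. by []. Qed.

Lemma mlen_mincr b j : mlen (mincr b j) = (mlen b).+1.
Proof.
rewrite /mlen.
under eq_bigr => k _ do rewrite ffunE.
have E : (\sum_(i < d) (i == j) = 1)%N.
  by rewrite (bigD1 j) //= eqxx big1 ?addn0 // => k /negbTE ->.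
by rewrite big_split /= E addn1.
Qed.

Lemma mlen_mzero : mlen mz = 0%N.
Proof. by rewrite /mlen big1 // => k _; rewrite ffunE. Qed.

Lemma mindex_ind (P : mindex -> Prop) :
  P mz -> (forall b j, P b -> P (mincr b j)) -> forall b, P b.
Proof.
move=> H0 HS.
suff : forall n b, mlen b = n -> P b by move=> H b; exact: (H _ b erefl).
elim=> [|n IH] b Hb.
  suff -> : b = mz by [].
  apply/ffunP => k; rewrite ffunE.
  have : (b k <= mlen b)%N by rewrite /mlen (bigD1 k) //= leq_addr.
  by rewrite Hb leqn0 => /eqP.
have [j Hj] : exists j, (0 < b j)%N.
  apply/existsP; apply: contraT; rewrite negb_exists => /forallP H.
  move: Hb; rewrite /mlen big1 // => k _.
  by have := H k; rewrite lt0n negbK => /eqP.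
pose b' : mindex := [ffun k => (b k - (k == j))%N].
have Eb : b = mincr b' j.
  apply/ffunP => k; rewrite !ffunE.
  case: (eqVneq k j) => [->|_] /=; last by rewrite subn0 addn0.
  by rewrite subnK.
rewrite Eb; apply: HS; apply: IH.
by move: Hb; rewrite Eb mlen_mincr => -[].
Qed.

Lemma xpow_mincr (x : pt) a k : xpow x (mincr a k) = xpow x a * x 0 k.
Proof.
rewrite /xpow.
under eq_bigr => i _ do rewrite ffunE exprD.
rewrite big_split /=; congr (_ * _).
rewrite (bigD1 k) //= eqxx expr1 big1 ?mulr1 //.
by move=> i /negbTE ->; rewrite expr0.
Qed.

Lemma xpow_mzero (x : pt) : xpow x mz = 1.
Proof. by rewrite /xpow big1 // => i _; rewrite ffunE expr0. Qed.

Lemma mfact_mzero : mfact R mz = 1 :> R.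
Proof. by rewrite /mfact big1 // => i _; rewrite ffunE. Qed.

Lemma mfact_gt0 a : 0 < mfact R a :> R.
Proof. by rewrite /mfact ltr0n prodn_gt0 // => i; exact: fact_gt0. Qed.

Lemma xpow_le (x : pt) a (r : R) : (forall k, `|x 0 k| <= r) ->
  `|xpow x a| <= r ^+ mlen a.
Proof.
move=> H; rewrite /xpow /mlen -prodrXr normr_prod.
apply: ler_prod => i _; rewrite normr_ge0 /= normrX.
by apply: lerXn2r; rewrite ?nnegrE ?(le_trans _ (H i)).
Qed.

Lemma le_ptnorm (x : pt) k : `|x 0 k| <= ptnorm x.
Proof. exact: (le_bigmax _ (fun k => `|x 0 k|)). Qed.

Lemma ptnorm_big (x : pt) (r : R) : 0 < r -> r <= ptnorm x -> exists k, r <= `|x 0 k|.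
Proof.
move=> r0 H; apply/not_existsP => H'; move: H; apply/negP; rewrite -ltNge.
apply: bigmax_lt => // k _; rewrite ltNge; apply/negP => Hk; exact: (H' k).
Qed.

End Basics.
Section Partials.
Variable R : realType.
Variable d : nat.
Local Notation C := (R[i]).
Local Notation pt := 'rV[R]_d.
Local Notation mindex := {ffun 'I_d -> nat}.
Local Notation mz := (@mzero d).
Implicit Types (f g : pt -> C) (a b : mindex) (x : pt).

Lemma lin_bound (p q : C) (A B e : R) : 0 < e -> 0 <= A -> 0 <= B ->
  A < e / (cabs p + cabs q + 1) -> B < e / (cabs p + cabs q + 1) ->
  cabs p * A + cabs q * B < e.
Proof.
move=> e0 A0 B0 HA HB.
have p0 := cabs_ge0 p; have q0 := cabs_ge0 q.
set c := cabs p + cabs q + 1 in HA HB.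
have c0 : 0 < c by rewrite /c ltr_wpDl // addr_ge0.
apply: (@le_lt_trans _ _ ((cabs p + cabs q) * (e / c))).
  by rewrite mulrDl; apply: lerD; apply: ler_wpM2l => //; apply: ltW.
rewrite mulrCA gtr_pMr // ltr_pdivrMr // mul1r /c; lra.
Qed.

Lemma is_partial_lin j f f' g g' (p q : C) :
  is_partial j f f' -> is_partial j g g' ->
  is_partial j (fun x => p * f x + q * g x) (fun x => p * f' x + q * g' x).
Proof.
move=> Hf Hg x e e0.
set c := cabs p + cabs q + 1.
have c0 : 0 < c by rewrite /c ltr_wpDl // addr_ge0 // cabs_ge0.
have ec0 : 0 < e / c by rewrite divr_gt0.
have [d1 [d10 H1]] := Hf x _ ec0.
have [d2 [d20 H2]] := Hg x _ ec0.
exists (Num.min d1 d2); split; first by rewrite lt_min d10 d20.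
move=> h h0; rewrite lt_min => /andP[hd1 hd2].
set y := x + h *: unitv R j.
have -> : (p * f y + q * g y - (p * f x + q * g x)) * ((h^-1)%:C)%C - (p * f' x + q * g' x)
  = p * ((f y - f x) * ((h^-1)%:C)%C - f' x) + q * ((g y - g x) * ((h^-1)%:C)%C - g' x) by ring.
apply: le_lt_trans (cabsD _ _) _; rewrite !cabsM.
by apply: lin_bound; rewrite ?cabs_ge0 //; [apply: H1 | apply: H2].
Qed.

Lemma is_partial_uniq j f g1 g2 : is_partial j f g1 -> is_partial j f g2 -> g1 = g2.
Proof.
move=> H1 H2; apply: funext => x; apply/eqP/negPn/negP => Hne.
have c0 : 0 < cabs (g1 x - g2 x).
  rewrite lt_def cabs_ge0 andbT; apply/eqP => /cabs_eq0/eqP; rewrite subr_eq0.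
  by move/eqP; apply/eqP.
set c := cabs (g1 x - g2 x) in c0.
have c20 : 0 < c / 2 by rewrite divr_gt0.
have [d1 [d10 K1]] := H1 x _ c20.
have [d2 [d20 K2]] := H2 x _ c20.
set h := Num.min d1 d2 / 2.
have h0 : 0 < h by rewrite divr_gt0 // lt_min d10 d20.
have hd : `|h| < Num.min d1 d2 by rewrite gtr0_norm // /h ltr_pdivrMr // ltr_pMr ?lt_min ?d10 ?d20 // ltr1n.
move: hd; rewrite lt_min => /andP[hd1 hd2].
have := K1 h (lt0r_neq0 h0) hd1; have := K2 h (lt0r_neq0 h0) hd2.
set Q := (_ * _)%R.
move=> L2 L1.
have : c <= cabs (g1 x - Q) + cabs (Q - g2 x) by apply: cabsDB.
rewrite cabsB; lra.
Qed.

Lemma is_derivs_lin f Df g Dg (p q : C) :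
  is_derivs f Df -> is_derivs g Dg ->
  is_derivs (fun x => p * f x + q * g x) (fun b x => p * Df b x + q * Dg b x).
Proof.
move=> [Hf0 Hf] [Hg0 Hg]; split; first by rewrite Hf0 Hg0.
by move=> b j; apply: is_partial_lin.
Qed.

Lemma is_derivs_uniq f D1 D2 : is_derivs f D1 -> is_derivs f D2 -> D1 = D2.
Proof.
move=> [H10 H1] [H20 H2]; apply: funext; apply: mindex_ind; first by rewrite H10 H20.
move=> b j Eb; apply: (is_partial_uniq (H1 b j)); rewrite Eb; exact: H2.
Qed.

Lemma is_derivs_ext f D f' D' : is_derivs f D ->
  (forall x, f x = f' x) -> (forall b x, D b x = D' b x) -> is_derivs f' D'.
Proof.
move=> H Hf HD.
have -> : f' = f by apply: funext => x; rewrite Hf.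
have -> : D' = D by apply: funext => b; apply: funext => x; rewrite HD.
exact: H.
Qed.

Lemma ccontinuous_lin f g (p q : C) : ccontinuous f -> ccontinuous g ->
  ccontinuous (fun x => p * f x + q * g x).
Proof.
move=> Hf Hg x e e0.
set c := cabs p + cabs q + 1.
have c0 : 0 < c by rewrite /c ltr_wpDl // addr_ge0 // cabs_ge0.
have ec0 : 0 < e / c by rewrite divr_gt0.
have [d1 [d10 H1]] := Hf x _ ec0.
have [d2 [d20 H2]] := Hg x _ ec0.
exists (Num.min d1 d2); split; first by rewrite lt_min d10 d20.
move=> y; rewrite lt_min => /andP[hd1 hd2].
have -> : p * f y + q * g y - (p * f x + q * g x) = p * (f y - f x) + q * (g y - g x) by ring.
apply: le_lt_trans (cabsD _ _) _; rewrite !cabsM.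
by apply: lin_bound; rewrite ?cabs_ge0 //; [apply: H1 | apply: H2].
Qed.

Definition wt (s t h : R) a b :=
  h ^+ (mlen a + mlen b) / ((mfact R a) `^ t * (mfact R b) `^ s).

Lemma wt_gt0 s t h a b : 0 < h -> 0 < wt s t h a b.
Proof.
move=> h0; rewrite /wt divr_gt0 ?exprn_gt0 // mulr_gt0 // powR_gt0 //; exact: mfact_gt0.
Qed.

Lemma wt_mono s t h h' a b : 0 < h -> h <= h' -> wt s t h a b <= wt s t h' a b.
Proof.
move=> h0 hh; rewrite /wt ler_wpM2r // ?invr_ge0 ?mulr_ge0 ?powR_ge0 //.
by rewrite lerXn2r // nnegrE ltW // (lt_le_trans h0).
Qed.

Lemma wt00 s t h : wt s t h mz mz = 1.
Proof. by rewrite /wt mlen_mzero expr0 mfact_mzero powR1 mulr1 invr1 mulr1. Qed.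

Lemma wt_half s t h a b :
  wt s t (h / 2) a b = wt s t h a b / 2 ^+ (mlen a + mlen b).
Proof. by rewrite /wt expr_div_n mulrAC. Qed.

Lemma pboundE s t h f M : pbound s t h f M <->
  exists D, is_derivs f D /\ forall x a b, wt s t h a b * (`|xpow x a| * cabs (D b x)) <= M.
Proof. by []. Qed.

Lemma pbound_M0 s t h f M : 0 < h -> pbound s t h f M -> 0 <= M.
Proof.
move=> h0 /pboundE [D [_ HD]]; apply: le_trans (HD 0 mz mz).
apply: mulr_ge0; [exact: ltW (wt_gt0 _ _ _ _ h0) | by rewrite mulr_ge0 ?cabs_ge0].
Qed.

Lemma lin_split0 (p q : C) (X : R) (u v : C) : 0 <= X ->
  X * cabs (p * u + q * v) <= cabs p * (X * cabs u) + cabs q * (X * cabs v).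
Proof.
move=> X0; rewrite mulrCA [cabs q * _]mulrCA -mulrDr ler_wpM2l //.
by apply: le_trans (cabsD _ _) _; rewrite !cabsM.
Qed.

Lemma lin_split (p q : C) (W X : R) (u v : C) : 0 <= W -> 0 <= X ->
  W * (X * cabs (p * u + q * v)) <= cabs p * (W * (X * cabs u)) + cabs q * (W * (X * cabs v)).
Proof.
move=> W0 X0; have := lin_split0 p q u v (mulr_ge0 W0 X0); by rewrite !mulrA.
Qed.

Lemma lin_le (p q : C) (A B MA MB : R) : A <= MA -> B <= MB ->
  cabs p * A + cabs q * B <= cabs p * MA + cabs q * MB.
Proof. by move=> HA HB; apply: lerD; apply: ler_wpM2l; rewrite ?cabs_ge0. Qed.

Lemma pbound_lin s t h1 h2 f g M1 M2 (p q : C) : 0 < h1 -> 0 < h2 ->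
  pbound s t h1 f M1 -> pbound s t h2 g M2 ->
  pbound s t (Num.min h1 h2) (fun x => p * f x + q * g x) (cabs p * M1 + cabs q * M2).
Proof.
move=> h10 h20 /pboundE [Df [Hf Bf]] /pboundE [Dg [Hg Bg]]; apply/pboundE.
exists (fun b x => p * Df b x + q * Dg b x); split; first exact: is_derivs_lin.
move=> x a b.
have hm0 : 0 < Num.min h1 h2 by rewrite lt_min h10 h20.
have W0 := wt_gt0 s t a b hm0.
apply: le_trans (lin_split _ _ _ _ (ltW W0) (normr_ge0 _)) _.
apply: lin_le.
  apply: le_trans (Bf x a b); apply: ler_wpM2r; first by rewrite mulr_ge0 ?cabs_ge0.
  by apply: wt_mono => //; rewrite ge_min lexx.
apply: le_trans (Bg x a b); apply: ler_wpM2r; first by rewrite mulr_ge0 ?cabs_ge0.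
by apply: wt_mono => //; rewrite ge_min lexx orbT.
Qed.

Lemma schwartz_lin f g (p q : C) : schwartz f -> schwartz g ->
  schwartz (fun x => p * f x + q * g x).
Proof.
move=> [Df [Hf [Cf Bf]]] [Dg [Hg [Cg Bg]]].
exists (fun b x => p * Df b x + q * Dg b x); split; first exact: is_derivs_lin.
split; first by move=> b; apply: ccontinuous_lin.
move=> a b; have [M1 H1] := Bf a b; have [M2 H2] := Bg a b.
exists (cabs p * M1 + cabs q * M2) => x.
by apply: le_trans (lin_split0 _ _ _ _ _) _; [rewrite normr_ge0 | apply: lin_le].
Qed.

Lemma GS_lin s t f g (p q : C) : GS s t f -> GS s t g ->
  GS s t (fun x => p * f x + q * g x).
Proof.
move=> [Sf [h1 [M1 [h10 Pf]]]] [Sg [h2 [M2 [h20 Pg]]]]; split; first exact: schwartz_lin.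
exists (Num.min h1 h2), (cabs p * M1 + cabs q * M2); split; first by rewrite lt_min h10 h20.
exact: pbound_lin.
Qed.

Lemma GS_ext s t f g : GS s t f -> (forall x, f x = g x) -> GS s t g.
Proof. by move=> H E; have -> : g = f by apply: funext => x; rewrite E. Qed.

Lemma GS_scale s t f (p : C) : GS s t f -> GS s t (fun x => p * f x).
Proof. by move=> H; apply: GS_ext (GS_lin p 0 H H) _ => x; rewrite mul0r addr0. Qed.

Lemma GS_sub s t f g : GS s t f -> GS s t g -> GS s t (fun x => f x - g x).
Proof. by move=> Hf Hg; apply: GS_ext (GS_lin 1 (-1) Hf Hg) _ => x; rewrite mul1r mulN1r. Qed.

End Partials.
Section Calc.
Variable R : realType.
Local Open Scope classical_set_scope.
Local Notation C := (R[i]).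

Definition rderiv (r r' : R -> R) := forall u e, 0 < e -> exists del, 0 < del /\
  forall h, h != 0 -> `|h| < del -> `|(r (u + h) - r u) / h - r' u| < e.

Lemma rderiv_is_derive r r' (u : R) : rderiv r r' -> is_derive u 1 r (r' u).
Proof.
move=> H.
have cv : (fun h : R => h^-1 *: ((r \o shift u) (h *: (1 : R)) - r u)) @ (0:R)^'%classic --> r' u.
  apply/cvgrPdist_lt => e e0.
  have [del [del0 Hd]] := H u e e0.
  near=> h.
  rewrite /= distrC -[h%:A]/(h * 1) mulr1 (addrC h u) -[h^-1 *: _]/(h^-1 * _) (mulrC h^-1); apply: Hd.
    by near: h; exact: nbhs_dnbhs_neq.
  by near: h; exact: dnbhs0_lt.
by apply: DeriveDef; [exact: cvgP cv | exact: cvg_lim cv].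
Unshelve. all: by end_near.
Qed.

Lemma rlip r r' a b K : rderiv r r' -> a <= b ->
  (forall u, a <= u <= b -> `|r' u| <= K) -> `|r b - r a| <= K * (b - a).
Proof.
move=> H ab HK.
have D (x : R) : is_derive x (1 : R) r (r' x) by exact: rderiv_is_derive.
have Cr : {within `[a, b], continuous r}.
  apply: continuous_subspaceT => x.
  have := @ex_derive _ _ _ _ _ _ _ (D x).
  by move/derivable1_diffP/differentiable_continuous.
have [c cab ->] := @MVT_segment R r r' a b ab (fun x _ => D x) Cr.
have ba : 0 <= b - a by rewrite subr_ge0.
rewrite normrM (ger0_norm ba); apply: ler_wpM2r => //.
by apply: HK; move: cab; rewrite in_itv.
Qed.

Definition cderiv (g g' : R -> C) := forall u e, 0 < e -> exists del, 0 < del /\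
  forall h, h != 0 -> `|h| < del -> cabs ((g (u + h) - g u) * ((h^-1)%:C)%C - g' u) < e.

Lemma cderiv_Re g g' : cderiv g g' ->
  rderiv (fun u => complex.Re (g u)) (fun u => complex.Re (g' u)).
Proof.
move=> H u e e0; have [del [del0 Hd]] := H u e e0; exists del; split => // h h0 hd.
apply: le_lt_trans (Hd h h0 hd); apply: le_trans (cabs_Re _).
by rewrite ReD ReN ReMR ReD ReN.
Qed.

Lemma cderiv_Im g g' : cderiv g g' ->
  rderiv (fun u => complex.Im (g u)) (fun u => complex.Im (g' u)).
Proof.
move=> H u e e0; have [del [del0 Hd]] := H u e e0; exists del; split => // h h0 hd.
apply: le_lt_trans (Hd h h0 hd); apply: le_trans (cabs_Im _).
by rewrite ImD ImN ImMR ImD ImN.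
Qed.

Lemma clip g g' a b K : cderiv g g' -> a <= b ->
  (forall u, a <= u <= b -> cabs (g' u) <= K) -> cabs (g b - g a) <= 2 * K * (b - a).
Proof.
move=> H ab HK; apply: le_trans (cabs_ReIm _) _.
rewrite ReD ReN ImD ImN.
have -> : 2 * K * (b - a) = K * (b - a) + K * (b - a) by ring.
apply: lerD.
  apply: rlip (cderiv_Re H) ab _ => u /HK; exact: le_trans (cabs_Re _).
apply: rlip (cderiv_Im H) ab _ => u /HK; exact: le_trans (cabs_Im _).
Qed.

Lemma clip2 g g' a b K : cderiv g g' ->
  (forall u, Num.min a b <= u <= Num.max a b -> cabs (g' u) <= K) ->
  cabs (g b - g a) <= 2 * K * `|b - a|.
Proof.
move=> H HK; case: (leP a b) => [ab|ab].
  rewrite ger0_norm ?subr_ge0 //; apply: (clip H ab) => u Hu.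
  by apply: HK; rewrite (min_idPl ab) (max_idPr ab).
rewrite cabsB ltr0_norm ?subr_lt0 // opprB; apply: (clip H (ltW ab)) => u Hu.
by apply: HK; rewrite (min_idPr (ltW ab)) (max_idPl (ltW ab)).
Qed.

Lemma cderiv_sub_lin g g' (c : C) : cderiv g g' ->
  cderiv (fun v => g v - (v%:C)%C * c) (fun v => g' v - c).
Proof.
move=> H u e e0; have [del [del0 Hd]] := H u e e0; exists del; split => // h h0 hd.
have E : ((u + h)%:C)%C - (u%:C)%C = (h%:C)%C by rewrite -rmorphB addrAC subrr add0r.
have E2 : (h%:C)%C * ((h^-1)%:C)%C = 1 by rewrite -rmorphM divff.
have -> : (g (u + h) - ((u + h)%:C)%C * c - (g u - (u%:C)%C * c)) * ((h^-1)%:C)%C - (g' u - c)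
   = (g (u + h) - g u) * ((h^-1)%:C)%C - g' u + c * (1 - (((u + h)%:C)%C - (u%:C)%C) * ((h^-1)%:C)%C) by ring.
by rewrite E E2 subrr mulr0 addr0; exact: Hd.
Qed.

End Calc.

Section CalcPt.
Variable R : realType.
Variable d : nat.
Local Notation C := (R[i]).
Local Notation pt := 'rV[R]_d.
Implicit Types (F : pt -> C) (x y z : pt).

Lemma line_cderiv j F F' z : is_partial j F F' ->
  cderiv (fun u => F (z + u *: unitv R j)) (fun u => F' (z + u *: unitv R j)).
Proof.
move=> H u e e0; have [del [del0 Hd]] := H (z + u *: unitv R j) e e0.
exists del; split => // h h0 hd.
by rewrite scalerDl addrA; exact: Hd.
Qed.

Lemma lipF F (P : 'I_d -> pt -> C) K : (forall j, is_partial j F (P j)) ->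
  (forall j y, cabs (P j y) <= K) ->
  forall x y, cabs (F y - F x) <= 2 * K * \sum_j `|y 0 j - x 0 j|.
Proof.
move=> HP HK x y.
pose p k : pt := \row_j (if (j < k)%N then y 0 j else x 0 j).
suff H : forall k, (k <= d)%N ->
    cabs (F (p k) - F x) <= 2 * K * \sum_(j < d | (j < k)%N) `|y 0 j - x 0 j|.
  have := H d (leqnn d).
  have -> : p d = y by apply/rowP => j; rewrite mxE ltn_ord; congr (y _ _); apply: val_inj; rewrite /= ?ord1.
  by rewrite (eq_bigl xpredT) // => j; rewrite ltn_ord.
elim=> [_|k IH kd].
  have -> : p 0%N = x by apply/rowP => j; rewrite mxE /=; congr (x _ _); apply: val_inj; rewrite /= ?ord1.
  by rewrite subrr cabs0 big_pred0 // mulr0.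
have kd' : (k < d)%N by [].
pose o := Ordinal kd'.
set c := y 0 o - x 0 o.
have Ep : p k.+1 = p k + c *: unitv R o.
  apply/rowP => j; rewrite /unitv !mxE /=.
  case: (eqVneq j o) => [->|jo] /=.
    by rewrite ltnSn ltnn mulr1 /c addrC subrK.
  have jk : (j < k.+1)%N = (j < k)%N.
    rewrite ltnS leq_eqVlt; case: eqP => //= Ejk; exfalso; move/eqP: jo; apply.
    by apply: val_inj; rewrite /= Ejk.
  by rewrite jk mulr0 addr0.
apply: le_trans (cabsDB _ (F (p k)) _) _.
rewrite (bigD1 o) /= ?ltnSn //.
have -> : \sum_(i < d | (i < k.+1)%N && (i != o)) `|y 0 i - x 0 i| =
          \sum_(i < d | (i < k)%N) `|y 0 i - x 0 i|.
  apply: eq_bigl => j; rewrite ltnS leq_eqVlt.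
  case: (eqVneq j o) => [->|jo] /=; first by rewrite eqxx ltnn.
  have : (val j != k) by apply: contra jo => /eqP E; apply/eqP/val_inj.
  by move/negbTE => ->; rewrite andbT.
rewrite mulrDr; apply: lerD; last exact: IH (ltnW kd).
rewrite Ep.
have := @clip2 R (fun u => F (p k + u *: unitv R o)) (fun u => P o (p k + u *: unitv R o)) 0 c K
  (line_cderiv _ (HP o)) (fun u _ => HK _ _).
by rewrite scale0r addr0 subr0.
Qed.

Lemma taylorF j F F1 F2 K x u : is_partial j F F1 -> is_partial j F1 F2 ->
  (forall y, cabs (F2 y) <= K) ->
  cabs (F (x + u *: unitv R j) - F x - (u%:C)%C * F1 x) <= 4 * K * u ^+ 2.
Proof.
move=> H1 H2 HK.
have K0 : 0 <= K by apply: le_trans (HK x) ; rewrite cabs_ge0.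
have G := cderiv_sub_lin (F1 x) (line_cderiv x H1).
have G1 := line_cderiv x H2.
have B : forall v, Num.min 0 u <= v <= Num.max 0 u ->
    cabs (F1 (x + v *: unitv R j) - F1 x) <= 2 * K * `|u|.
  move=> v Hv.
  have Hc := clip2 (a:=0) (b:=v) (K:=K) G1 (fun w _ => HK _).
  rewrite scale0r addr0 subr0 in Hc.
  apply: le_trans Hc _; apply: ler_wpM2l; first by rewrite mulr_ge0.
  move: Hv; case: (leP 0 u) => [u0|u0].
    move=> /andP[v0 vu]; rewrite !ger0_norm //; exact: le_trans vu.
  move=> /andP[uv v0].
  by rewrite !ler0_norm ?(ltW u0) // lerN2.
have Hc := clip2 (a:=0) (b:=u) G B.
rewrite scale0r addr0 mul0r !subr0 in Hc.
rewrite addrAC; apply: le_trans Hc _.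
rewrite -real_normK ?num_real // (_ : 2 * (2 * K * `|u|) * `|u| = 4 * K * `|u| ^+ 2) //; ring.
Qed.

End CalcPt.
Section Forward.
Variable R : realType.
Variable d : nat.
Local Notation C := (R[i]).
Local Notation pt := 'rV[R]_d.
Local Notation mindex := {ffun 'I_d -> nat}.
Local Notation mz := (@mzero d).
Variables s t : R.
Implicit Types (f g : pt -> C).

Lemma pbound_scale h f M (c : R) : 0 <= c -> pbound s t h f M ->
  pbound s t h (fun x => (c%:C)%C * f x) (c * M).
Proof.
move=> c0 /pboundE [D [HD B]]; apply/pboundE.
exists (fun b x => (c%:C)%C * D b x); split.
  by apply: is_derivs_ext (is_derivs_lin (c%:C)%C 0 HD HD) _ _ => *; rewrite mul0r addr0.
move=> x a b; rewrite cabsM cabsR (ger0_norm c0).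
rewrite (_ : wt s t h a b * (`|xpow x a| * (c * cabs (D b x))) =
   c * (wt s t h a b * (`|xpow x a| * cabs (D b x)))); last by ring.
by apply: ler_wpM2l.
Qed.

Lemma nbhd_absorb U f : GS_nbhd0 s t U -> GS s t f ->
  exists c : R, 0 < c /\ U (fun x => (c%:C)%C * f x).
Proof.
move=> [U1 [U2 U3]] Gf; have [Sf [h [M [h0 Pf]]]] := Gf.
have [e [e0 He]] := U3 h h0.
have M0 := pbound_M0 h0 Pf.
have X0 : 0 < 2 * (M + 1) by rewrite mulr_gt0 // ltr_wpDl.
set c := e / (2 * (M + 1)).
have c0 : 0 < c by rewrite divr_gt0.
exists c; split => //; apply: He; first exact: GS_scale Gf.
exists (c * M); split; last exact: pbound_scale (ltW c0) Pf.
rewrite /c mulrAC -mulrA gtr_pMr // ltr_pdivrMr // mul1r; lra.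
Qed.

Lemma sum_inv_ge (N : nat) (c : nat -> R) n : (n < N)%N -> (forall k, 0 < c k) ->
  (c n)^-1 <= \sum_(k < N) (c k)^-1.
Proof.
move=> nN c0; rewrite (bigD1 (Ordinal nN)) //= lerDl sumr_ge0 // => k _.
by rewrite invr_ge0 ltW.
Qed.

Lemma forward (phi : nat -> pt -> C) : (forall n, GS s t (phi n)) -> GS_converges s t phi ->
  GS_bounded s t phi /\ pointwise_converges phi.
Proof.
move=> hphi [f [Gf Hcv]]; split.
  move=> U HU; have [N HN] := Hcv U HU.
  have [cf [cf0 Uf]] := nbhd_absorb HU Gf.
  have [cn Hcn] := choice (fun n => nbhd_absorb HU (hphi n)).
  have cn0 k : 0 < cn k by case: (Hcn k).
  have S0 : 0 <= \sum_(k < N) (cn k)^-1 by rewrite sumr_ge0 // => k _; rewrite invr_ge0 ltW.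
  set lam := 1 + cf^-1 + \sum_(k < N) (cn k)^-1.
  have cfi0 : 0 < cf^-1 by rewrite invr_gt0.
  have lam0 : 0 < lam by rewrite /lam; lra.
  have li0 : 0 < lam^-1 by rewrite invr_gt0.
  exists lam; split => // n.
  have [U1 [U2 U3]] := HU.
  case: (leqP N n) => Hn.
    have -> : (fun x => ((lam^-1)%:C)%C * phi n x) =
       (fun x => ((lam^-1)%:C)%C * (phi n x - f x) + ((lam^-1 / cf)%:C)%C * ((cf%:C)%C * f x)).
      apply: funext => x; rewrite mulrA -rmorphM divfK ?gt_eqF //; ring.
    apply: U2; [exact: HN | exact: Uf |].
    have q0 : 0 <= lam^-1 / cf by rewrite divr_ge0 // ltW.
    rewrite !cabsR (ger0_norm (ltW li0)) (ger0_norm q0).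
    rewrite -[X in X + _]mulr1 -mulrDr mulrC ler_pdivrMr // mul1r /lam; lra.
  have -> : (fun x => ((lam^-1)%:C)%C * phi n x) =
     (fun x => ((lam^-1 / cn n)%:C)%C * (((cn n)%:C)%C * phi n x) + 0 * (((cn n)%:C)%C * phi n x)).
    apply: funext => x; rewrite mul0r addr0 mulrA -rmorphM divfK // gt_eqF //.
  have Un : U (fun x => ((cn n)%:C)%C * phi n x) by case: (Hcn n).
  apply: U2 => //.
  have q0 : 0 <= lam^-1 / cn n by rewrite divr_ge0 // ltW.
  rewrite cabs0 addr0 cabsR (ger0_norm q0) mulrC ler_pdivrMr // mul1r.
  have := sum_inv_ge Hn cn0; rewrite /lam; lra.
move=> x; exists (f x) => e e0.
pose U := fun g => GS s t g /\ cabs (g x) < e.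
have HU : GS_nbhd0 s t U.
  split; first by move=> g [].
  split.
    move=> g1 g2 a b [G1 H1] [G2 H2] Hab; split; first exact: GS_lin.
    apply: le_lt_trans (cabsD _ _) _; rewrite !cabsM.
    set m := Num.max (cabs (g1 x)) (cabs (g2 x)).
    have m0 : 0 <= m by rewrite le_max cabs_ge0.
    apply: (@le_lt_trans _ _ m); last by rewrite gt_max H1 H2.
    apply: (@le_trans _ _ ((cabs a + cabs b) * m)).
      by rewrite mulrDl; apply: lin_le; rewrite le_max lexx ?orbT.
    by rewrite ler_piMl.
  move=> h h0; exists e; split => // g Gg [M [Me Pg]]; split => //.
  move/pboundE: Pg => [D [[D0 _] HD]].
  have := HD x mz mz; rewrite wt00 mul1r xpow_mzero normr1 mul1r D0 => Hg.
  exact: le_lt_trans Hg Me.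
have [N HN] := Hcv U HU.
by exists N => n /HN [].
Qed.

End Forward.
Section Regular.
Variable R : realType.
Variable d : nat.
Local Notation C := (R[i]).
Local Notation pt := 'rV[R]_d.
Local Notation mindex := {ffun 'I_d -> nat}.
Local Notation mz := (@mzero d).
Variables s t : R.
Implicit Types (f g : pt -> C).

Lemma wt_ratio (r h : R) (a b : mindex) : 0 < h ->
  wt s t r a b = (r / h) ^+ (mlen a + mlen b) * wt s t h a b.
Proof.
move=> h0; rewrite /wt expr_div_n mulrA divfK // expf_neq0 // gt_eqF //.
Qed.

Lemma GS_derivs f : GS s t f -> exists D, is_derivs f D.
Proof. by move=> [[D [HD _]] _]; exists D. Qed.

Lemma regular (phi : nat -> pt -> C) (Dn : nat -> mindex -> pt -> C) :
  (forall n, GS s t (phi n)) -> (forall n, is_derivs (phi n) (Dn n)) ->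
  GS_bounded s t phi ->
  exists h0 M0, 0 < h0 /\
    forall n x a b, wt s t h0 a b * (`|xpow x a| * cabs (Dn n b x)) <= M0.
Proof.
move=> hphi hD Hb.
apply: contrapT => Hnot.
pose rho (k : nat) : R := (k.+1%:R)^-1.
have rho0 k : 0 < rho k by rewrite invr_gt0 ltr0n.
have Hk : forall k : nat, exists p : nat * pt * (mindex * mindex),
    k%:R < wt s t (rho k) p.2.1 p.2.2 * (`|xpow p.1.2 p.2.1| * cabs (Dn p.1.1 p.2.2 p.1.2)).
  move=> k; apply: contrapT => Hn; apply: Hnot; exists (rho k), k%:R; split => //.
  move=> n x a b; rewrite leNgt; apply/negP => Hlt; apply: Hn.
  by exists (n, x, (a, b)).
have [F HF] := choice Hk.
pose nk k := (F k).1.1.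
pose xk k := (F k).1.2.
pose ak k := (F k).2.1.
pose bk k := (F k).2.2.
pose ck k := wt s t (rho k) (ak k) (bk k).
pose U := fun g => GS s t g /\ forall D, is_derivs g D ->
   forall k, ck k * (`|xpow (xk k) (ak k)| * cabs (D (bk k) (xk k))) <= 1.
have HU : GS_nbhd0 s t U.
  split; first by move=> g [].
  split.
    move=> g1 g2 p q [G1 H1] [G2 H2] Hpq; split; first exact: GS_lin.
    move=> D HD k.
    have [D1 HD1] := GS_derivs G1; have [D2 HD2] := GS_derivs G2.
    have -> := is_derivs_uniq HD (is_derivs_lin p q HD1 HD2).
    apply: le_trans (lin_split _ _ _ _ _ _) _.
    - by apply: ltW; apply: wt_gt0.
    - exact: normr_ge0.
    apply: le_trans (lin_le _ _ (H1 _ HD1 k) (H2 _ HD2 k)) _.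
    by rewrite !mulr1.
  move=> h h0.
  pose K := Num.trunc h^-1.
  pose B := 1 + \sum_(k < K) (rho k / h) ^+ (mlen (ak k) + mlen (bk k)).
  have S0 : 0 <= \sum_(k < K) (rho k / h) ^+ (mlen (ak k) + mlen (bk k)).
    by rewrite sumr_ge0 // => k _; rewrite exprn_ge0 // divr_ge0 // ltW.
  have B0 : 0 < B by rewrite /B; lra.
  have HB : forall k, (rho k / h) ^+ (mlen (ak k) + mlen (bk k)) <= B.
    move=> k; case: (ltnP k K) => kK.
      rewrite /B (bigD1 (Ordinal kK)) //= addrA ler_wpDr //; first by rewrite sumr_ge0 // => j _; rewrite exprn_ge0 // divr_ge0 // ltW.
      by rewrite lerDr.
    apply: le_trans (_ : 1 <= B); last by rewrite /B lerDl.
    apply: exprn_ile1; first by rewrite divr_ge0 // ltW.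
    rewrite ler_pdivrMr // mul1r /rho -[X in _ <= X](invrK h) lef_pV2 ?posrE ?invr_gt0 ?ltr0n //.
    apply: ltW; apply: lt_le_trans (truncnS_gt h^-1) _.
    by rewrite ler_nat.
  exists B^-1; split; first by rewrite invr_gt0.
  move=> g Gg [M [Me Pg]]; split => // D HD k.
  have M0 := pbound_M0 h0 Pg.
  move/pboundE: Pg => [D0 [HD0 BD0]].
  rewrite (is_derivs_uniq HD HD0) /ck (wt_ratio _ _ _ h0) -mulrA.
  apply: (@le_trans _ _ (B * M)).
    apply: ler_pM => //; first by rewrite exprn_ge0 // divr_ge0 // ltW.
    by apply: mulr_ge0; [apply: ltW; apply: wt_gt0 | rewrite mulr_ge0 // cabs_ge0].
  rewrite -(mulfV (lt0r_neq0 B0)) ler_pM2l //; exact: ltW.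
have [lam [lam0 Hlam]] := Hb U HU.
pose k := (Num.trunc lam).+1.
have [_ Hk1] := Hlam (nk k).
have li0 : 0 < lam^-1 by rewrite invr_gt0.
have HD' : is_derivs (fun x => ((lam^-1)%:C)%C * phi (nk k) x)
                     (fun b x => ((lam^-1)%:C)%C * Dn (nk k) b x).
  by apply: is_derivs_ext (is_derivs_lin _ 0 (hD (nk k)) (hD (nk k))) _ _ => *;
    rewrite mul0r addr0.
have := Hk1 _ HD' k.
rewrite cabsM cabsR (ger0_norm (ltW li0)).
rewrite (_ : ck k * (`|xpow (xk k) (ak k)| * (lam^-1 * cabs (Dn (nk k) (bk k) (xk k)))) =
   lam^-1 * (ck k * (`|xpow (xk k) (ak k)| * cabs (Dn (nk k) (bk k) (xk k))))); last by ring.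
rewrite mulrC ler_pdivrMr // mul1r.
have := HF k; rewrite -/(nk k) -/(xk k) -/(ak k) -/(bk k) -/(ck k).
have : lam < k%:R by rewrite /k; exact: truncnS_gt.
move=> H1 H2 H3; have := lt_trans H1 H2; rewrite ltNge H3 //.
Qed.

End Regular.
Section Conv.
Variable R : realType.
Local Notation C := (R[i]).
Local Open Scope classical_set_scope.

Definition convC (u : nat -> C) (L : C) := forall e, 0 < e ->
  exists N, forall n, (N <= n)%N -> cabs (u n - L) < e.

Definition cauchyC (u : nat -> C) := forall e, 0 < e ->
  exists N, forall n m, (N <= n)%N -> (N <= m)%N -> cabs (u n - u m) < e.

Lemma cauchyR_conv (v : nat -> R) :
  (forall e, 0 < e -> exists N, forall n m, (N <= n)%N -> (N <= m)%N -> `|v n - v m| < e) ->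
  exists L, forall e, 0 < e -> exists N, forall n, (N <= n)%N -> `|v n - L| < e.
Proof.
move=> H.
have cv : cvg (v @ \oo).
  apply/cauchy_cvgP; apply: cauchy_exP => e e0.
  have [N HN] := H e e0; exists (v N).
  by exists N => // n /= Hn; rewrite /ball /= HN.
exists (lim (v @ \oo)) => e e0.
move/cvgrPdist_lt: cv => /(_ e e0) [N _ HN].
exists N => n Hn; rewrite distrC; exact: HN.
Qed.

Lemma cauchyC_conv u : cauchyC u -> exists L, convC u L.
Proof.
move=> H.
have [LR HR] : exists L, forall e, 0 < e -> exists N, forall n, (N <= n)%N ->
    `|complex.Re (u n) - L| < e.
  apply: cauchyR_conv => e e0; have [N HN] := H e e0; exists N => n m Hn Hm.
  by apply: le_lt_trans (HN n m Hn Hm); rewrite -ReN -ReD cabs_Re.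
have [LI HI] : exists L, forall e, 0 < e -> exists N, forall n, (N <= n)%N ->
    `|complex.Im (u n) - L| < e.
  apply: cauchyR_conv => e e0; have [N HN] := H e e0; exists N => n m Hn Hm.
  by apply: le_lt_trans (HN n m Hn Hm); rewrite -ImN -ImD cabs_Im.
exists (LR +i* LI)%C => e e0.
have e20 : 0 < e / 2 by rewrite divr_gt0.
have [N1 H1] := HR _ e20; have [N2 H2] := HI _ e20.
exists (maxn N1 N2) => n; rewrite geq_max => /andP[n1 n2].
apply: le_lt_trans (cabs_ReIm _) _.
rewrite ReD ReN ImD ImN /=.
have := H1 n n1; have := H2 n n2; lra.
Qed.

Lemma convC_lin u v L K (p q : C) : convC u L -> convC v K ->
  convC (fun n => p * u n + q * v n) (p * L + q * K).
Proof.
move=> Hu Hv e e0.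
set c := cabs p + cabs q + 1.
have c0 : 0 < c by rewrite /c ltr_wpDl // addr_ge0 // cabs_ge0.
have ec0 : 0 < e / c by rewrite divr_gt0.
have [N1 H1] := Hu _ ec0; have [N2 H2] := Hv _ ec0.
exists (maxn N1 N2) => n; rewrite geq_max => /andP[n1 n2].
have -> : p * u n + q * v n - (p * L + q * K) = p * (u n - L) + q * (v n - K) by ring.
apply: le_lt_trans (cabsD _ _) _; rewrite !cabsM.
by apply: lin_bound; rewrite ?cabs_ge0 //; [apply: H1 | apply: H2].
Qed.

Lemma convC_le u L (X B : R) : convC u L -> 0 <= X ->
  (forall n, X * cabs (u n) <= B) -> X * cabs L <= B.
Proof.
move=> Hu X0 HB; apply/ler_addgt0Pr => e e0.
have X1 : 0 < X + 1 by rewrite ltr_wpDl.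
have [N HN] := Hu (e / (X + 1)) (divr_gt0 e0 X1).
apply: (@le_trans _ _ (X * cabs (u N) + X * cabs (u N - L))).
  rewrite -mulrDr ler_wpM2l //.
  have E : L = u N + - (u N - L) by rewrite opprB addrC subrK.
  by rewrite {1}E; apply: le_trans (cabsD _ _) _; rewrite cabsN.
apply: lerD; first exact: HB.
apply: (@le_trans _ _ (X * (e / (X + 1)))).
  by rewrite ler_wpM2l // ltW // HN.
rewrite mulrCA ger_pMr // ler_pdivrMr // mul1r; lra.
Qed.

Lemma cabs4 (a b c e : C) : cabs (a - b - c + e) <= cabs a + cabs b + cabs c + cabs e.
Proof.
apply: le_trans (cabsD _ _) _; rewrite lerD2r.
apply: le_trans (cabsD _ _) _; rewrite cabsN lerD2r.
by apply: le_trans (cabsD _ _) _; rewrite cabsN.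
Qed.

End Conv.
Section Construct.
Variable R : realType.
Variable d : nat.
Local Notation C := (R[i]).
Local Notation pt := 'rV[R]_d.
Local Notation mindex := {ffun 'I_d -> nat}.
Local Notation mz := (@mzero d).
Variables s t : R.
Variable phi : nat -> pt -> C.
Variable Dn : nat -> mindex -> pt -> C.
Hypothesis hD : forall n, is_derivs (phi n) (Dn n).
Variables h0 M0 : R.
Hypothesis h00 : 0 < h0.
Hypothesis HB : forall n x a b, wt s t h0 a b * (`|xpow x a| * cabs (Dn n b x)) <= M0.
Hypothesis Hpw : pointwise_converges phi.

Definition Wb (a b : mindex) := M0 / wt s t h0 a b.

Lemma M0_ge0 : 0 <= M0.
Proof.
apply: le_trans (HB 0 0 mz mz); apply: mulr_ge0.
  exact: ltW (wt_gt0 _ _ _ _ h00).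
by rewrite mulr_ge0 ?cabs_ge0.
Qed.

Lemma Wb_ge0 a b : 0 <= Wb a b.
Proof. by rewrite /Wb divr_ge0 ?M0_ge0 // ltW // wt_gt0. Qed.

Lemma Wb_bound n x a b : `|xpow x a| * cabs (Dn n b x) <= Wb a b.
Proof. by rewrite /Wb ler_pdivlMr ?wt_gt0 // mulrC; exact: HB. Qed.

Lemma Wd n b x : cabs (Dn n b x) <= Wb mz b.
Proof. by have := Wb_bound n x mz b; rewrite xpow_mzero normr1 mul1r. Qed.

Lemma partialDn n b j : is_partial j (Dn n b) (Dn n (mincr b j)).
Proof. by case: (hD n). Qed.

Lemma Dn_taylor n b j x u :
  cabs (Dn n b (x + u *: unitv R j) - Dn n b x - (u%:C)%C * Dn n (mincr b j) x)
   <= 4 * Wb mz (mincr (mincr b j) j) * u ^+ 2.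
Proof. by apply: taylorF; [exact: partialDn | exact: partialDn | move=> y; exact: Wd]. Qed.

Lemma cabs_diff (a b L : C) (e : R) : cabs (a - L) < e -> cabs (b - L) < e ->
  cabs (a - b) < e + e.
Proof.
move=> Ha Hb; apply: le_lt_trans (cabsDB _ L _) _.
by rewrite (cabsB L); apply: ltrD.
Qed.

Lemma Dn_conv : forall b x, exists L, convC (fun n => Dn n b x) L.
Proof.
apply: mindex_ind.
  move=> x; have [L HL] := Hpw x; exists L => e e0.
  have [N HN] := HL e e0; exists N => n Hn; rewrite (hD n).1; exact: HN.
move=> b j IH x; apply: cauchyC_conv => e e0.
set K := Wb mz (mincr (mincr b j) j).
have K0 : 0 <= K := Wb_ge0 _ _.
set u := e / (16 * (K + 1)).
have K1 : 0 < 16 * (K + 1) by rewrite mulr_gt0 // ltr_wpDl.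
have u0 : 0 < u by rewrite divr_gt0.
have Hu : u * (16 * (K + 1)) = e by rewrite /u divfK // gt_eqF.
have eu0 : 0 < e * u / 8 by rewrite divr_gt0 // mulr_gt0.
have [LA HA] := IH (x + u *: unitv R j).
have [LB HLB] := IH x.
have [N1 H1] := HA _ eu0; have [N2 H2] := HLB _ eu0.
exists (maxn N1 N2) => n m; rewrite !geq_max => /andP[n1 n2] /andP[m1 m2].
set A := fun k => Dn k b (x + u *: unitv R j).
set Bx := fun k => Dn k b x.
set D1 := fun k => Dn k (mincr b j) x.
set T := fun k => A k - Bx k - (u%:C)%C * D1 k.
have E : (u%:C)%C * (D1 n - D1 m) = (A n - A m) - (Bx n - Bx m) - T n + T m by rewrite /T; ring.
have HE : u * cabs (D1 n - D1 m) <=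
   (e * u / 8 + e * u / 8) + (e * u / 8 + e * u / 8) + 4 * K * u ^+ 2 + 4 * K * u ^+ 2.
  have Eu : u * cabs (D1 n - D1 m) = cabs ((u%:C)%C * (D1 n - D1 m)) by rewrite cabsM cabsR ger0_norm // ltW.
  rewrite Eu E.
  apply: le_trans (cabs4 _ _ _ _) _.
  apply: lerD; first apply: lerD; first apply: lerD.
  - by apply: ltW; apply: cabs_diff; [exact: H1 n n1 | exact: H1 m m1].
  - by apply: ltW; apply: cabs_diff; [exact: H2 n n2 | exact: H2 m m2].
  - exact: Dn_taylor.
  - exact: Dn_taylor.
have : u * cabs (D1 n - D1 m) < u * e.
  apply: le_lt_trans HE _.
  rewrite expr2; nra.
by rewrite ltr_pM2l.
Qed.

Definition G b x : C := proj1_sig (cid (Dn_conv b x)).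

Lemma G_conv b x : convC (fun n => Dn n b x) (G b x).
Proof. exact: proj2_sig (cid (Dn_conv b x)). Qed.

Lemma G_bound x a b : `|xpow x a| * cabs (G b x) <= Wb a b.
Proof. by apply: convC_le (G_conv b x) _ _ => // n; exact: Wb_bound. Qed.

Lemma Gd b x : cabs (G b x) <= Wb mz b.
Proof. by have := G_bound x mz b; rewrite xpow_mzero normr1 mul1r. Qed.

Lemma convC_ext (u v : nat -> C) L K : convC u L -> (forall n, u n = v n) -> L = K -> convC v K.
Proof. by move=> H E <- e e0; have [N HN] := H e e0; exists N => n Hn; rewrite -E; exact: HN. Qed.

Lemma G_taylor b j x u :
  cabs (G b (x + u *: unitv R j) - G b x - (u%:C)%C * G (mincr b j) x)
   <= 4 * Wb mz (mincr (mincr b j) j) * u ^+ 2.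
Proof.
have H1 := convC_lin 1 (-1) (G_conv b (x + u *: unitv R j)) (G_conv b x).
have H2 := convC_lin 1 (- (u%:C)%C) H1 (G_conv (mincr b j) x).
have H3 : convC (fun n => Dn n b (x + u *: unitv R j) - Dn n b x - (u%:C)%C * Dn n (mincr b j) x)
  (G b (x + u *: unitv R j) - G b x - (u%:C)%C * G (mincr b j) x).
  by apply: convC_ext H2 _ _ => *; ring.
have := convC_le H3 ler01 (fun n => _ ); rewrite mul1r; apply => n.
rewrite mul1r; exact: Dn_taylor.
Qed.

Lemma G_partial b j : is_partial j (G b) (G (mincr b j)).
Proof.
move=> x e e0.
set K := Wb mz (mincr (mincr b j) j).
have K0 : 0 <= K := Wb_ge0 _ _.
have K1 : 0 < 4 * K + 1 by rewrite ltr_wpDl // mulr_ge0.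
exists (e / (4 * K + 1)); split; first by rewrite divr_gt0.
move=> h hne hd.
have -> : (G b (x + h *: unitv R j) - G b x) * ((h^-1)%:C)%C - G (mincr b j) x =
   (G b (x + h *: unitv R j) - G b x - (h%:C)%C * G (mincr b j) x) * ((h^-1)%:C)%C.
  have E : (h%:C)%C * ((h^-1)%:C)%C = 1 by rewrite -rmorphM divff.
  move: E; set hC := (h%:C)%C; set hi := ((h^-1)%:C)%C => E.
  rewrite (_ : (G b (x + h *: unitv R j) - G b x - hC * G (mincr b j) x) * hi =
     (G b (x + h *: unitv R j) - G b x) * hi - G (mincr b j) x * (hC * hi)); last by ring.
  by rewrite E mulr1.
rewrite cabsM cabsR normfV.
have hn0 : 0 < `|h| by rewrite normr_gt0.
rewrite ltr_pdivrMr //.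
apply: le_lt_trans (G_taylor b j x h) _.
rewrite -real_normK ?num_real // -/K.
move: hd; rewrite ltr_pdivlMr // => hd.
rewrite expr2; nra.
Qed.

Lemma G_derivs : is_derivs (G mz) G.
Proof. by split => // b j; exact: G_partial. Qed.

Lemma ptnorm_ge0 (x : pt) : 0 <= ptnorm x.
Proof. by rewrite /ptnorm; elim/big_ind: _ => // u v Hu Hv; rewrite le_max Hu. Qed.

Lemma sum_ptnorm (x y : pt) : \sum_j `|y 0 j - x 0 j| <= d%:R * ptnorm (y - x).
Proof.
apply: le_trans (_ : \sum_(j < d) ptnorm (y - x) <= _).
  by apply: ler_sum => j _; have := le_ptnorm (y - x) j; rewrite !mxE.
by rewrite sumr_const card_ord mulr_natl.
Qed.

Lemma sum_bound (F : 'I_d -> R) j : (forall k, 0 <= F k) -> F j <= \sum_k F k.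
Proof. by move=> F0; rewrite (bigD1 j) //= lerDl sumr_ge0. Qed.

Lemma lip_cont (F : pt -> C) (P : 'I_d -> pt -> C) K : 0 <= K ->
  (forall j, is_partial j F (P j)) -> (forall j y, cabs (P j y) <= K) -> ccontinuous F.
Proof.
move=> K0 HP HK x e e0.
have c0 : 0 < 2 * K * d%:R + 1 by rewrite ltr_wpDl // mulr_ge0 // mulr_ge0.
exists (e / (2 * K * d%:R + 1)); split; first by rewrite divr_gt0.
move=> y; rewrite ltr_pdivlMr // => Hy.
apply: le_lt_trans (lipF HP HK x y) _.
have p0 := ptnorm_ge0 (y - x).
apply: (@le_lt_trans _ _ (2 * K * (d%:R * ptnorm (y - x)))).
  by apply: ler_wpM2l; [rewrite mulr_ge0 | exact: sum_ptnorm].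
have : 0 <= 2 * K * d%:R by rewrite !mulr_ge0.
nra.
Qed.

Lemma G_cont b : ccontinuous (G b).
Proof.
apply: (@lip_cont _ (fun j => G (mincr b j)) (\sum_j Wb mz (mincr b j))).
- by rewrite sumr_ge0 // => j _; exact: Wb_ge0.
- by move=> j; exact: G_partial.
move=> j y; apply: le_trans (Gd _ _) _; apply: sum_bound => k; exact: Wb_ge0.
Qed.

Lemma G_GS : GS s t (G mz).
Proof.
split.
  exists G; split; first exact: G_derivs.
  split; first exact: G_cont.
  by move=> a b; exists (Wb a b) => x; exact: G_bound.
exists h0, M0; split => //; apply/pboundE; exists G; split; first exact: G_derivs.
move=> x a b; apply: le_trans (_ : wt s t h0 a b * Wb a b <= _).
  by apply: ler_wpM2l; [apply: ltW; apply: wt_gt0 | exact: G_bound].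
by rewrite /Wb mulrC divfK // gt_eqF // wt_gt0.
Qed.

Lemma cabsB_le (u v : C) : cabs (u - v) <= cabs u + cabs v.
Proof. by apply: le_trans (cabsD _ _) _; rewrite cabsN. Qed.

Lemma gn_bound n x a b : `|xpow x a| * cabs (Dn n b x - G b x) <= 2 * Wb a b.
Proof.
apply: le_trans (_ : `|xpow x a| * (cabs (Dn n b x) + cabs (G b x)) <= _).
  by apply: ler_wpM2l => //; exact: cabsB_le.
rewrite mulrDr mulr2n mulrDl mul1r; apply: lerD; [exact: Wb_bound | exact: G_bound].
Qed.

Lemma UC a b e : 0 < e -> exists N, forall n, (N <= n)%N ->
  forall x, `|xpow x a| * cabs (Dn n b x - G b x) <= e.
Proof.
move=> e0.
pose g n x := Dn n b x - G b x.
pose V := \sum_k 2 * Wb (mincr a k) b.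
have V0 : 0 <= V by rewrite sumr_ge0 // => k _; rewrite mulr_ge0 // Wb_ge0.
have Hdec : forall n x k, `|xpow x (mincr a k)| * cabs (g n x) <= V.
  move=> n x k; apply: le_trans (gn_bound n x (mincr a k) b) _.
  by apply: (@sum_bound (fun k => 2 * Wb (mincr a k) b)) => j; rewrite mulr_ge0 // Wb_ge0.
pose Kb := \sum_j 2 * Wb mz (mincr b j).
have Kb0 : 0 <= Kb by rewrite sumr_ge0 // => k _; rewrite mulr_ge0 // Wb_ge0.
have Hlip : forall n x y, cabs (g n y - g n x) <= 2 * Kb * \sum_j `|y 0 j - x 0 j|.
  move=> n; apply: (@lipF _ _ _ (fun j x => Dn n (mincr b j) x - G (mincr b j) x)).
    move=> j; have := is_partial_lin 1 (-1) (partialDn n b j) (G_partial b j).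
    have E1 : (fun x => 1 * Dn n b x + (-1) * G b x) = g n.
      by apply: funext => y; rewrite /g mul1r mulN1r.
    have E2 : (fun x => 1 * Dn n (mincr b j) x + (-1) * G (mincr b j) x) =
              (fun x => Dn n (mincr b j) x - G (mincr b j) x).
      by apply: funext => y; rewrite mul1r mulN1r.
    by rewrite E1 E2.
  move=> j y; apply: le_trans (cabsB_le _ _) _.
  apply: le_trans (_ : Wb mz (mincr b j) + Wb mz (mincr b j) <= _).
    by apply: lerD; [exact: Wd | exact: Gd].
  rewrite -mulr2n -mulr_natl.
  by apply: (@sum_bound (fun k => 2 * Wb mz (mincr b k))) => k; rewrite mulr_ge0 // Wb_ge0.
pose Rr := V / e + 1.
have Rr1 : 1 <= Rr by rewrite /Rr lerDr divr_ge0 // ltW.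
have Rr0 : 0 < Rr by apply: lt_le_trans Rr1.
have eRr : e * Rr = V + e by rewrite /Rr mulrDr mulr1 mulrC divfK // gt_eqF.
pose P := Rr ^+ mlen a.
have P1 : 1 <= P by rewrite /P exprn_ege1.
have P0 : 0 < P by apply: lt_le_trans P1.
have c0 : 0 < 2 * Kb * d%:R + 1 by rewrite ltr_wpDl // !mulr_ge0.
have eP0 : 0 < e / (2 * P) by rewrite divr_gt0 // mulr_gt0.
pose del := e / (2 * P) / (2 * Kb * d%:R + 1).
have del0 : 0 < del by rewrite divr_gt0.
pose NG := Num.trunc (2 * Rr / del).
pose z (i : {ffun 'I_d -> 'I_NG.+1}) : pt := \row_k (- Rr + (i k)%:R * del).
have Hpt : forall i, exists N, forall n, (N <= n)%N -> cabs (g n (z i)) < e / (2 * P).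
  move=> i; have [N HN] := @G_conv b (z i) _ eP0; exists N => n Hn; exact: HN.
have [Nf HNf] := choice Hpt.
exists (\max_(i : {ffun 'I_d -> 'I_NG.+1}) Nf i) => n Hn x.
have HNi : forall i, cabs (g n (z i)) < e / (2 * P).
  by move=> i; apply: HNf; apply: leq_trans Hn; exact: leq_bigmax.
have Y0 : 0 <= `|xpow x a| * cabs (g n x) by rewrite mulr_ge0 // cabs_ge0.
case: (ltP (ptnorm x) Rr) => Hx.
  have Hxk : forall k, `|x 0 k| < Rr by move=> k; exact: le_lt_trans (le_ptnorm x k) Hx.
  pose q k := (x 0 k + Rr) / del.
  have q0 : forall k, 0 <= q k.
    move=> k; rewrite divr_ge0 ?(ltW del0) // -lerBlDr sub0r.
    by have := Hxk k; rewrite ltr_norml => /andP[/ltW].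
  pose i : {ffun 'I_d -> 'I_NG.+1} := [ffun k => inord (Num.trunc (q k))].
  have Hi : forall k, (i k : nat) = Num.trunc (q k).
    move=> k; rewrite ffunE inordK // ltnS; apply: le_truncn.
    rewrite /q ler_pM2r ?invr_gt0 // mulr2n mulrDl mul1r lerD2r.
    by have := Hxk k; rewrite ltr_norml => /andP[_ /ltW].
  have Hz : forall k, `|x 0 k - z i 0 k| <= del.
    move=> k; rewrite mxE Hi.
    have := truncn_itv (q0 k); move=> /andP[t1 t2].
    have Eq : x 0 k + Rr = q k * del by rewrite /q divfK // gt_eqF.
    have -> : x 0 k - (- Rr + (Num.trunc (q k))%:R * del) = (q k - (Num.trunc (q k))%:R) * del.
      by rewrite mulrBl -Eq; ring.
    rewrite normrM (gtr0_norm del0) ger0_norm ?subr_ge0 //.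
    rewrite ler_piMl ?subr_ge0 ?(ltW del0) //; move: t2; rewrite -natr1; lra.
  have Hsum : \sum_j `|x 0 j - z i 0 j| <= d%:R * del.
    apply: le_trans (_ : \sum_(j < d) del <= _); first by apply: ler_sum => j _; exact: Hz.
    by rewrite sumr_const card_ord mulr_natl.
  have Hg : cabs (g n x) <= e / P.
    apply: le_trans (_ : cabs (g n (z i)) + cabs (g n x - g n (z i)) <= _).
      by rewrite -{1}(subrK (g n (z i)) (g n x)) addrC cabsD.
    have L1 := Hlip n (z i) x.
    have L2 : 2 * Kb * \sum_j `|x 0 j - z i 0 j| <= e / (2 * P).
      apply: le_trans (_ : 2 * Kb * (d%:R * del) <= _).
        by apply: ler_wpM2l => //; rewrite mulr_ge0.
      rewrite mulrA /del mulrCA ger_pMr // ler_pdivrMr // mul1r; lra.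
    have : e / P = e / (2 * P) + e / (2 * P).
      by field; rewrite gt_eqF.
    move=> ->; apply: lerD; [exact: ltW | exact: le_trans L1 L2].
  have Hxp : `|xpow x a| <= P by apply: xpow_le => k; exact: ltW.
  apply: le_trans (_ : P * (e / P) <= _).
    by apply: ler_pM => //; rewrite cabs_ge0.
  by rewrite mulrC divfK // gt_eqF.
have [k Hk] := ptnorm_big Rr0 Hx.
have := Hdec n x k; rewrite xpow_mincr normrM.
move=> H.
have : (`|xpow x a| * cabs (g n x)) * Rr <= e * Rr.
  rewrite eRr; apply: le_trans (_ : (`|xpow x a| * cabs (g n x)) * `|x 0 k| <= _).
    by apply: ler_wpM2l.
  apply: le_trans (_ : V <= _); last by rewrite lerDl ltW.
  by apply: le_trans H; rewrite mulrAC.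
by rewrite ler_pM2r.
Qed.

Lemma main_conv : (forall n, GS s t (phi n)) -> GS_cvg_to s t phi (G mz).
Proof.
move=> hphi; split; first exact: G_GS.
move=> U [U1 [U2 U3]].
have h10 : 0 < h0 / 2 by rewrite divr_gt0.
have [e [e0 He]] := U3 _ h10.
have M00 := M0_ge0.
pose m0 := (Num.trunc (4 * M0 / e)).+1.
pose T2 := ({ffun 'I_d -> 'I_m0} * {ffun 'I_d -> 'I_m0})%type.
pose ea (p : T2) : mindex := [ffun k => nat_of_ord (p.1 k)].
pose eb (p : T2) : mindex := [ffun k => nat_of_ord (p.2 k)].
have Hp : forall p : T2, exists N, forall n, (N <= n)%N -> forall x,
    `|xpow x (ea p)| * cabs (Dn n (eb p) x - G (eb p) x) <= e / 2 / wt s t (h0 / 2) (ea p) (eb p).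
  move=> p; apply: UC; apply: divr_gt0; [by rewrite divr_gt0 | exact: wt_gt0].
have [Nf HNf] := choice Hp.
exists (\max_(p : T2) Nf p) => n Hn.
apply: He; first exact: GS_sub (hphi n) G_GS.
exists (e / 2); split; first by rewrite ltr_pdivrMr // ltr_pMr // ltr1n.
apply/pboundE; exists (fun b x => Dn n b x - G b x); split.
  apply: is_derivs_ext (is_derivs_lin 1 (-1) (hD n) G_derivs) _ _ => *;
    by rewrite mul1r mulN1r.
move=> x a b.
have w0 : 0 < wt s t (h0 / 2) a b by exact: wt_gt0.
case: (leqP m0 (mlen a + mlen b)) => Hm.
  set m := (mlen a + mlen b)%N in Hm *.
  have Q0 : 0 < 2 ^+ m :> R by rewrite exprn_gt0.
  have Hmq : (m%:R : R) < 2 ^+ m by rewrite -natrX ltr_nat ltn_expl.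
  have Hme : 4 * M0 / e < m%:R.
    apply: lt_le_trans (truncnS_gt _) _; by rewrite ler_nat.
  have wh0 := wt_gt0 s t a b h00.
  rewrite wt_half -/m.
  apply: le_trans (_ : wt s t h0 a b / 2 ^+ m * (2 * Wb a b) <= _).
    by apply: ler_wpM2l; [rewrite divr_ge0 ?ltW // | exact: gn_bound].
  have -> : wt s t h0 a b / 2 ^+ m * (2 * Wb a b) = 2 * M0 / 2 ^+ m.
    by rewrite /Wb; field; rewrite !gt_eqF.
  rewrite ler_pdivrMr //.
  move: Hme; rewrite ltr_pdivrMr // => Hme.
  nra.
have Ha : forall k, (a k < m0)%N.
  move=> k; apply: leq_ltn_trans Hm; apply: leq_trans (leq_addr _ _).
  by rewrite /mlen (bigD1 k) //= leq_addr.
have Hb' : forall k, (b k < m0)%N.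
  move=> k; apply: leq_ltn_trans Hm; apply: leq_trans (leq_addl _ _).
  by rewrite /mlen (bigD1 k) //= leq_addr.
pose p : T2 := ([ffun k => Ordinal (Ha k)], [ffun k => Ordinal (Hb' k)]).
have Ea : ea p = a by apply/ffunP => k; rewrite !ffunE.
have Eb : eb p = b by apply/ffunP => k; rewrite !ffunE.
have := HNf p n (leq_trans (leq_bigmax p) Hn) x; rewrite Ea Eb => H.
apply: le_trans (_ : wt s t (h0 / 2) a b * (e / 2 / wt s t (h0 / 2) a b) <= _).
  by apply: ler_wpM2l => //; exact: ltW.
by rewrite mulrC divfK // gt_eqF.
Qed.

End Construct.




Unset Implicit Arguments.

Theorem lemma4p2 (R : realType) (d : nat) (s t : R) (hs : 0 <= s) (ht : 0 <= t)
  (phi : nat -> 'rV[R]_d -> R[i]) (hphi : forall n, GS s t (phi n)) :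
  GS_converges s t phi <-> (GS_bounded s t phi /\ pointwise_converges phi).
Proof.
split; first exact: forward.
move=> [Hb Hpw].
have [Dn HDn] := choice (fun n => GS_derivs (hphi n)).
have [h0 [M0 [h00 HB]]] := regular hphi HDn Hb.
by exists (G HDn h00 HB Hpw (mzero d)); apply: main_conv.
Qed.
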